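(* Let $(A,\mu,E,\Delta,\epsilon)$ be a regular weak multiplier bialgebra over a field. Then for all $a,b\in A$: (1) if $T_3(a\otimes b)=\sum_i x_i\otimes y_i$ then $\sum_i y_i\,\overline\sqcap^L(x_i)=ba$; (2) if $T_4(a\otimes b)=\sum_i x_i\otimes y_i$ then $\sum_i \overline\sqcap^R(y_i)\,x_i=ba$; (3) if $T_1(a\otimes b)=\sum_i x_i\otimes y_i$ then $\sum_i \sqcap^L(x_i)\,y_i=ab$; (4) if $T_2(a\otimes b)=\sum_i x_i\otimes y_i$ then $\sum_i x_i\,\sqcap^R(y_i)=ab$. (That is, $\mu^{\mathrm{op}}(\overline\sqcap^L\otimes\mathrm{id})T_3=\mu^{\mathrm{op}}$, $\mu^{\mathrm{op}}(\mathrm{id}\otimes\overline\sqcap^R)T_4=\mu^{\mathrm{op}}$, $\mu(\sqcap^L\otimes\mathrm{id})T_1=\mu$, $\mu(\mathrm{id}\otimes\sqcap^R)T_2=\mu$, with $\mu^{\mathrm{op}}(x\otimes y)=yx$.)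
   Context: Let $k$ be a field. A non-unital $k$-algebra $A$ is idempotent if its multiplication $\mu$ is surjective and has non-degenerate multiplication if ($ab=0\ \forall a$)$\Rightarrow b=0$ and ($ba=0\ \forall a$)$\Rightarrow b=0$. $\mathbb M(A)$ is its multiplier algebra (pairs $(\lambda,\rho)$ of linear maps $A\to A$ with $a\lambda(b)=\rho(a)b$), a unital algebra containing $A$ as a dense ideal; $A\otimes A\subseteq\mathbb M(A\otimes A)$. Multiplicative $\gamma:A\to\mathbb M(B)$ with idempotent $e\in\mathbb M(B)$, $\langle\gamma(a)b\rangle=eB$, $\langle b\gamma(a)\rangle=Be$ ($\langle\,\rangle$=span) extends uniquely to multiplicative $\overline\gamma:\mathbb M(A)\to\mathbb M(B)$ with $\overline\gamma(1)=e$. A weak multiplier bialgebra: idempotent $A$ with non-degenerate multiplication, idempotent $E\in\mathbb M(A\otimes A)$, multiplicative linear $\Delta:A\to\mathbb M(A\otimes A)$, linear $\epsilon:A\to k$ with: (i) $T_1(a\otimes b):=\Delta(a)(1\otimes b)$, $T_2(a\otimes b):=(a\otimes1)\Delta(b)$ lie in $A\otimes A$; (ii) $(T_2\otimes\mathrm{id})(\mathrm{id}\otimes T_1)=(\mathrm{id}\otimes T_1)(T_2\otimes\mathrm{id})$; (iii) $(\epsilon\otimes\mathrm{id})T_1=\mu=(\mathrm{id}\otimes\epsilon)T_2$; (iv) $\langle\Delta(a)(b\otimes b')\rangle=\langle E(b\otimes b')\rangle$, $\langle(b\otimes b')\Delta(a)\rangle=\langle(b\otimes b')E\rangle$; (v)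 $(E\otimes1)(1\otimes E)=E^{(3)}=(1\otimes E)(E\otimes1)$ with $E^{(3)}:=(\overline{\mathrm{id}\otimes\Delta})(E)=(\overline{\Delta\otimes\mathrm{id}})(E)$; (vi) $(\epsilon\otimes\mathrm{id})((1\otimes a)E(b\otimes c))=(\epsilon\otimes\mathrm{id})(\Delta(a)(b\otimes c))$ and $(\epsilon\otimes\mathrm{id})((a\otimes b)E(1\otimes c))=(\epsilon\otimes\mathrm{id})((a\otimes b)\Delta(c))$. It is regular if moreover $T_3(a\otimes b):=(1\otimes b)\Delta(a)$ and $T_4(a\otimes b):=\Delta(b)(a\otimes1)$ lie in $A\otimes A$ for all $a,b$. For $a\in A$ define multipliers: $\overline\sqcap^L(a)$ by $\overline\sqcap^L(a)b=(\epsilon\otimes\mathrm{id})((a\otimes1)\Delta(b))$, $b\overline\sqcap^L(a)=(\epsilon\otimes\mathrm{id})((a\otimes b)E)$; $\overline\sqcap^R(a)$ by $b\overline\sqcap^R(a)=(\mathrm{id}\otimes\epsilon)(\Delta(b)(1\otimes a))$, $\overline\sqcap^R(a)b=(\mathrm{id}\otimes\epsilon)(E(b\otimes a))$; $\sqcap^L(a)$ by $\sqcap^L(a)b=(\epsilon\otimes\mathrm{id})(E(a\otimes b))$, $b\sqcap^L(a)=(\epsilon\otimes\mathrm{id})(\Delta(b)(a\otimes1))$; $\sqcap^R(a)$ by $b\sqcap^R(a)=(\mathrm{id}\otimes\epsilon)((b\otimes a)E)$, $\sqcap^R(a)b=(\mathrm{id}\otimes\epsilon)((1\otimes a)\Delta(b))$.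 *)

(* Defs.v *)
From HB Require Import structures.
From mathcomp Require Import all_boot all_algebra.
Set Implicit Arguments. Unset Strict Implicit. Unset Printing Implicit Defensive.
Import GRing.Theory.
Local Open Scope ring_scope.

Section WMB.
Variables (k : fieldType) (A : lmodType k).

(* s : tensor2 stands for  \sum_(p <- s) p.1 (x) p.2  in A (x) A.          *)
Definition tensor2 := seq (A * A)%type.
(* s : tensor3 stands for  \sum_(p <- s) p.1.1 (x) p.1.2 (x) p.2.          *)
Definition tensor3 := seq (A * A * A)%type.

Definition bilin (V : lmodType k) (f : A -> A -> V) : Prop :=
  (forall r x x' y, f (r *: x + x') y = r *: f x y + f x' y) /\
  (forall r x y y', f x (r *: y + y') = r *: f x y + f x y').

Definition trilin (V : lmodType k) (f : A -> A -> A -> V) : Prop :=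
  [/\ (forall r x x' y z, f (r *: x + x') y z = r *: f x y z + f x' y z),
      (forall r x y y' z, f x (r *: y + y') z = r *: f x y z + f x y' z) &
      (forall r x y z z', f x y (r *: z + z') = r *: f x y z + f x y z')].

(* equality in A (x) A : via the universal property of the tensor product *)
Definition teq2 (s t : tensor2) : Prop :=
  forall (V : lmodType k) (f : A -> A -> V), bilin f ->
    \sum_(p <- s) f p.1 p.2 = \sum_(p <- t) f p.1 p.2.

Definition teq3 (s t : tensor3) : Prop :=
  forall (V : lmodType k) (f : A -> A -> A -> V), trilin f ->
    \sum_(p <- s) f p.1.1 p.1.2 p.2 = \sum_(p <- t) f p.1.1 p.1.2 p.2.

Definition tscale2 (r : k) (s : tensor2) : tensor2 := [seq (r *: p.1, p.2) | p <- s].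
Definition tscale3 (r : k) (s : tensor3) : tensor3 :=
  [seq (r *: p.1.1, p.1.2, p.2) | p <- s].

(* linear extension to A (x) A of a map given on pure tensors *)
Definition tlift2 (F : A -> A -> tensor2) (s : tensor2) : tensor2 :=
  flatten [seq F p.1 p.2 | p <- s].
Definition tlift3 (F : A -> A -> A -> tensor3) (s : tensor3) : tensor3 :=
  flatten [seq F p.1.1 p.1.2 p.2 | p <- s].

(* bilinear (resp. trilinear) maps A x A -> A (x) A  (= linear maps on A(x)A) *)
Definition tbilin2 (F : A -> A -> tensor2) : Prop :=
  (forall r x x' y, teq2 (F (r *: x + x') y) (tscale2 r (F x y) ++ F x' y)) /\
  (forall r x y y', teq2 (F x (r *: y + y')) (tscale2 r (F x y) ++ F x y')).
Definition ttrilin3 (F : A -> A -> A -> tensor3) : Prop :=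
  [/\ (forall r x x' y z, teq3 (F (r *: x + x') y z) (tscale3 r (F x y z) ++ F x' y z)),
      (forall r x y y' z, teq3 (F x (r *: y + y') z) (tscale3 r (F x y z) ++ F x y' z)) &
      (forall r x y z z', teq3 (F x y (r *: z + z')) (tscale3 r (F x y z) ++ F x y z'))].

Definition tspan2 (P : tensor2 -> Prop) (t : tensor2) : Prop :=
  exists l : seq (k * tensor2),
    (forall q, q \in l -> P q.2) /\
    teq2 t (flatten [seq tscale2 q.1 q.2 | q <- l]).

Section WithMul.
Variable mul : A -> A -> A.

Definition nualg : Prop :=
  [/\ (forall r x x' y, mul (r *: x + x') y = r *: mul x y + mul x' y),
      (forall r x y y', mul x (r *: y + y') = r *: mul x y + mul x y') &
      (forall x y z, mul x (mul y z) = mul (mul x y) z)].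

Definition idempotent_alg : Prop :=
  forall c : A, exists s : seq (A * A), c = \sum_(p <- s) mul p.1 p.2.

Definition nondeg_mul : Prop :=
  (forall b : A, (forall a, mul a b = 0) -> b = 0) /\
  (forall b : A, (forall a, mul b a = 0) -> b = 0).

Definition tprod2 (s t : tensor2) : tensor2 :=
  [seq (mul p.1 q.1, mul p.2 q.2) | p <- s, q <- t].
Definition tprod3 (s t : tensor3) : tensor3 :=
  [seq (mul p.1.1 q.1.1, mul p.1.2 q.1.2, mul p.2 q.2) | p <- s, q <- t].

(* (a(x)1) s,  (1(x)b) s,  s (a(x)1),  s (1(x)b) *)
Definition lmul_1 (a : A) (s : tensor2) : tensor2 := [seq (mul a p.1, p.2) | p <- s].
Definition lmul_2 (b : A) (s : tensor2) : tensor2 := [seq (p.1, mul b p.2) | p <- s].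
Definition rmul_1 (s : tensor2) (a : A) : tensor2 := [seq (mul p.1 a, p.2) | p <- s].
Definition rmul_2 (s : tensor2) (b : A) : tensor2 := [seq (p.1, mul p.2 b) | p <- s].

(* A multiplier of A(x)A, given by its left action L (L x y = lambda(x(x)y))
   and right action R (R x y = rho(x(x)y)). *)
Definition is_mult2 (L R : A -> A -> tensor2) : Prop :=
  [/\ tbilin2 L, tbilin2 R &
      forall x x' y y', teq2 (tprod2 [:: (x, x')] (L y y'))
                             (tprod2 (R x x') [:: (y, y')])].

Definition is_mult3 (L R : A -> A -> A -> tensor3) : Prop :=
  [/\ ttrilin3 L, ttrilin3 R &
      forall x x' x'' y y' y'', teq3 (tprod3 [:: (x, x', x'')] (L y y' y''))
                                     (tprod3 (R x x' x'') [:: (y, y', y'')])].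

End WithMul.

Definition eps_id (eps : A -> k) (s : tensor2) : A := \sum_(p <- s) eps p.1 *: p.2.
Definition id_eps (eps : A -> k) (s : tensor2) : A := \sum_(p <- s) eps p.2 *: p.1.

Record wmb_data := WMBData {
  mul : A -> A -> A;
  eps : A -> k;
  (* E in M(A(x)A):  EL x y = E(x(x)y),  ER x y = (x(x)y)E *)
  EL : A -> A -> tensor2;
  ER : A -> A -> tensor2;
  (* Delta(a) in M(A(x)A):  DL a x y = Delta(a)(x(x)y),  DR a x y = (x(x)y)Delta(a) *)
  DL : A -> A -> A -> tensor2;
  DR : A -> A -> A -> tensor2;
  (* T1 a b = Delta(a)(1(x)b), T2 a b = (a(x)1)Delta(b),
     T3 a b = (1(x)b)Delta(a), T4 a b = Delta(b)(a(x)1)  (elements of A(x)A) *)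
  T1 : A -> A -> tensor2;
  T2 : A -> A -> tensor2;
  T3 : A -> A -> tensor2;
  T4 : A -> A -> tensor2;
  (* E^(3) in M(A(x)A(x)A) *)
  E3L : A -> A -> A -> tensor3;
  E3R : A -> A -> A -> tensor3
}.

Section WMBAx.
Variable W : wmb_data.
Local Notation mul := (mul W).
Local Notation eps := (eps W).
Local Notation EL := (EL W).
Local Notation ER := (ER W).
Local Notation DL := (DL W).
Local Notation DR := (DR W).

(* multipliers E(x)1 and 1(x)E of A(x)A(x)A *)
Definition E1L x y z : tensor3 := [seq (p.1, p.2, z) | p <- EL x y].
Definition E1R x y z : tensor3 := [seq (p.1, p.2, z) | p <- ER x y].
Definition E2L x y z : tensor3 := [seq (x, p.1, p.2) | p <- EL y z].
Definition E2R x y z : tensor3 := [seq (x, p.1, p.2) | p <- ER y z].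

(* (id(x)Delta)(u(x)v) = u (x) Delta(v) in M(A(x)A(x)A):
   its action on x(x)y(x)z from the left / right *)
Definition gIdD_L u v x y z : tensor3 := [seq (mul u x, p.1, p.2) | p <- DL v y z].
Definition gIdD_R u v x y z : tensor3 := [seq (mul x u, p.1, p.2) | p <- DR v y z].
(* (Delta(x)id)(u(x)v) = Delta(u) (x) v *)
Definition gDId_L u v x y z : tensor3 := [seq (p.1, p.2, mul v z) | p <- DL u x y].
Definition gDId_R u v x y z : tensor3 := [seq (p.1, p.2, mul z v) | p <- DR u x y].

(* M = gammabar(E), where gamma : A(x)A -> M(A(x)A(x)A) is multiplicative
   with idempotent e and gammabar(1) = e: characterised by
   M e = M = e M,  M (gamma(w) y) = gamma(E w) y,  (y gamma(w)) M = y gamma(w E). *)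
Definition is_ext_E (M_L M_R eL eR : A -> A -> A -> tensor3)
    (gL gR : A -> A -> A -> A -> A -> tensor3) : Prop :=
  [/\ forall x y z, teq3 (tlift3 M_L (eL x y z)) (M_L x y z)
                /\ teq3 (tlift3 eR (M_R x y z)) (M_R x y z),
      forall x y z, teq3 (tlift3 eL (M_L x y z)) (M_L x y z)
                /\ teq3 (tlift3 M_R (eR x y z)) (M_R x y z),
      forall u v x y z, teq3 (tlift3 M_L (gL u v x y z))
                             (flatten [seq gL p.1 p.2 x y z | p <- EL u v]) &
      forall u v x y z, teq3 (tlift3 M_R (gR u v x y z))
                             (flatten [seq gR p.1 p.2 x y z | p <- ER u v])].

Record is_wmb : Prop := {
  wmb_alg : nualg mul;
  wmb_idem : idempotent_alg mul;
  wmb_nondeg : nondeg_mul mul;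
  wmb_E_mult : is_mult2 mul EL ER;
  wmb_E_idem : forall y y', teq2 (tlift2 EL (EL y y')) (EL y y')
                         /\ teq2 (tlift2 ER (ER y y')) (ER y y');
  wmb_D_mult : forall a, is_mult2 mul (DL a) (DR a);
  wmb_D_lin : forall r a c y y',
      teq2 (DL (r *: a + c) y y') (tscale2 r (DL a y y') ++ DL c y y')
   /\ teq2 (DR (r *: a + c) y y') (tscale2 r (DR a y y') ++ DR c y y');
  wmb_D_mul : forall a c y y',
      teq2 (DL (mul a c) y y') (tlift2 (DL a) (DL c y y'))
   /\ teq2 (DR (mul a c) y y') (tlift2 (DR c) (DR a y y'));
  wmb_eps_lin : forall r x y, eps (r *: x + y) = r * eps x + eps y;
  (* (i): T1(a(x)b) = Delta(a)(1(x)b) and T2(a(x)b) = (a(x)1)Delta(b) lie in A(x)A *)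
  wmb_T1 : forall a b x x',
      teq2 (tprod2 mul (T1 W a b) [:: (x, x')]) (DL a x (mul b x'))
   /\ teq2 (tprod2 mul [:: (x, x')] (T1 W a b)) (rmul_2 mul (DR a x x') b);
  wmb_T2 : forall a b x x',
      teq2 (tprod2 mul (T2 W a b) [:: (x, x')]) (lmul_1 mul a (DL b x x'))
   /\ teq2 (tprod2 mul [:: (x, x')] (T2 W a b)) (DR b (mul x a) x');
  wmb_coass : forall a b c,
      teq3 (flatten [seq [seq (q.1, q.2, p.2) | q <- T2 W a p.1] | p <- T1 W b c])
           (flatten [seq [seq (q.1, p.1, p.2) | p <- T1 W q.2 c] | q <- T2 W a b]);
  wmb_counit : forall a b, eps_id eps (T1 W a b) = mul a b
                        /\ id_eps eps (T2 W a b) = mul a b;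
  wmb_span_L :
      (forall a b b', tspan2 (fun t => exists c c', t = EL c c') (DL a b b'))
   /\ (forall b b', tspan2 (fun t => exists a c c', t = DL a c c') (EL b b'));
  wmb_span_R :
      (forall a b b', tspan2 (fun t => exists c c', t = ER c c') (DR a b b'))
   /\ (forall b b', tspan2 (fun t => exists a c c', t = DR a c c') (ER b b'));
  (* (v): E^(3) = (id(x)Delta)bar(E) = (Delta(x)id)bar(E) and
          (E(x)1)(1(x)E) = E^(3) = (1(x)E)(E(x)1) *)
  wmb_E3_mult : is_mult3 mul (E3L W) (E3R W);
  wmb_E3_idD : is_ext_E (E3L W) (E3R W) E2L E2R gIdD_L gIdD_R;
  wmb_E3_Did : is_ext_E (E3L W) (E3R W) E1L E1R gDId_L gDId_R;
  wmb_E3_12 : forall x y z,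
      teq3 (E3L W x y z) (tlift3 E1L (E2L x y z))
   /\ teq3 (E3R W x y z) (tlift3 E2R (E1R x y z));
  wmb_E3_21 : forall x y z,
      teq3 (E3L W x y z) (tlift3 E2L (E1L x y z))
   /\ teq3 (E3R W x y z) (tlift3 E1R (E2R x y z));
  wmb_eps_E1 : forall a b c,
      eps_id eps (lmul_2 mul a (EL b c)) = eps_id eps (DL a b c);
  wmb_eps_E2 : forall a b c,
      eps_id eps (rmul_2 mul (ER a b) c) = eps_id eps (DR c a b)
}.

(* regular: T3(a(x)b) = (1(x)b)Delta(a) and T4(a(x)b) = Delta(b)(a(x)1) lie in A(x)A *)
Definition is_regular_wmb : Prop :=
  [/\ is_wmb,
      (forall a b x x',
         teq2 (tprod2 mul (T3 W a b) [:: (x, x')]) (lmul_2 mul b (DL a x x'))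
      /\ teq2 (tprod2 mul [:: (x, x')] (T3 W a b)) (DR a x (mul x' b))) &
      (forall a b x x',
         teq2 (tprod2 mul (T4 W a b) [:: (x, x')]) (DL b (mul a x) x')
      /\ teq2 (tprod2 mul [:: (x, x')] (T4 W a b)) (rmul_1 mul (DR b x x') a))].

(* piLbar_l a b = bar-sqcap^L(a) b = (eps(x)id)((a(x)1)Delta(b))
   piLbar_r a b = b bar-sqcap^L(a) = (eps(x)id)((a(x)b)E)                 *)
Definition piLbar_l (a b : A) : A := eps_id eps (T2 W a b).
Definition piLbar_r (a b : A) : A := eps_id eps (ER a b).
(* piRbar_r a b = b bar-sqcap^R(a) = (id(x)eps)(Delta(b)(1(x)a))
   piRbar_l a b = bar-sqcap^R(a) b = (id(x)eps)(E(b(x)a))                 *)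
Definition piRbar_r (a b : A) : A := id_eps eps (T1 W b a).
Definition piRbar_l (a b : A) : A := id_eps eps (EL b a).
(* piL_l a b = sqcap^L(a) b = (eps(x)id)(E(a(x)b))
   piL_r a b = b sqcap^L(a) = (eps(x)id)(Delta(b)(a(x)1))                 *)
Definition piL_l (a b : A) : A := eps_id eps (EL a b).
Definition piL_r (a b : A) : A := eps_id eps (T4 W a b).
(* piR_r a b = b sqcap^R(a) = (id(x)eps)((b(x)a)E)
   piR_l a b = sqcap^R(a) b = (id(x)eps)((1(x)a)Delta(b))                 *)
Definition piR_r (a b : A) : A := id_eps eps (ER b a).
Definition piR_l (a b : A) : A := id_eps eps (T3 W b a).

End WMBAx.
End WMB.

(* Main.v *)
Require Import Defs.
From HB Require Import structures.
From mathcomp Require Import all_boot all_algebra.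
From mathcomp Require Import boolp classical_sets.
Require Import Defs.
Import GRing.Theory.
Local Open Scope ring_scope.

Module Aux.
Set Implicit Arguments. Unset Strict Implicit. Unset Printing Implicit Defensive.

Section Sep.
Variables (k : fieldType) (A : lmodType k).

Definition lspan (l : seq A) (v : A) :=
  exists c : nat -> k, v = \sum_(i < size l) c i *: l`_i.

Definition linf (phi : A -> k) := forall r x y, phi (r *: x + y) = r * phi x + phi y.

Lemma lspan0 l : lspan l 0.
Proof. by exists (fun=> 0); rewrite big1 // => i _; rewrite scale0r. Qed.

Lemma lspanC l r x y : lspan l x -> lspan l y -> lspan l (r *: x + y).
Proof.
move=> [cx ->] [cy ->]; exists (fun i => r * cx i + cy i).
rewrite scaler_sumr -big_split /=; apply: eq_bigr => i _.
by rewrite scalerDl scalerA.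
Qed.

Lemma mem_lspan l x : x \in l -> lspan l x.
Proof.
move=> xl; exists (fun i => if i == index x l then 1 else 0).
have ix : (index x l < size l)%N by rewrite index_mem.
rewrite (bigD1 (Ordinal ix)) //=.
rewrite eqxx scale1r nth_index // big1 ?addr0 // => i.
by rewrite -val_eqE /= => /negbTE ->; rewrite scale0r.
Qed.

Lemma functional_sep (l : seq A) (e : A) : ~ lspan l e ->
  exists phi, [/\ linf phi, phi e = 1 & forall v, lspan l v -> phi v = 0].
Proof.
move=> ne.
pose P : set (set A) := fun W => (forall r x y, W x -> W y -> W (r *: x + y)) /\
   (forall w, W w -> ~ lspan l (e - w)).
have [W [[WC Wn] Wmax]] : exists W, P W /\ forall B, (W `<` B)%classic -> ~ P B.
  apply: Zorn_bigcup => F FP Ftot; split.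
    move=> r x y [X FX Xx] [Y FY Yy].
    have [XY|YX] := Ftot _ _ FX FY.
      by exists Y => //; apply: (FP _ FY).1 => //; apply: XY.
    by exists X => //; apply: (FP _ FX).1 => //; apply: YX.
  by move=> w [X FX Xw]; apply: (FP _ FX).2.
pose W0 w := W w \/ w = 0.
have W0C r x y : W0 x -> W0 y -> W0 (r *: x + y).
  move=> [Wx|->] [Wy|->]; rewrite ?scaler0 ?add0r ?addr0; try by [left|right].
  - by left; apply: WC.
  - left; have := WC (r - 1) x x Wx Wx.
    by rewrite scalerBl scale1r subrK.
pose Wsp z := exists w s, [/\ W0 w, lspan l s & z = w + s].
have WspC r x y : Wsp x -> Wsp y -> Wsp (r *: x + y).
  move=> [w [s [w0 ss ->]]] [w' [s' [w0' ss' ->]]].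
  exists (r *: w + w'), (r *: s + s'); split; [exact: W0C|exact: lspanC|].
  by rewrite scalerDr addrACA.
have Wsp0 : Wsp 0 by exists 0, 0; split; [right|exact: lspan0|rewrite addr0].
have Wspe : ~ Wsp e.
  move=> [w [s [[Ww|->] ss ee]]].
    by apply: (Wn w Ww); rewrite ee addrAC subrr add0r.
  by apply: ne; rewrite ee add0r.
have dec v : exists c, exists u, Wsp u /\ v = u + c *: e.
  pose B z := exists w r, W0 w /\ z = w + r *: v.
  have BC : forall r x y, B x -> B y -> B (r *: x + y).
    move=> r x y [w [c [w0 ->]]] [w' [c' [w0' ->]]].
    exists (r *: w + w'), (r * c + c'); split; first exact: W0C.
    by rewrite scalerDr addrACA scalerDl scalerA.
  have WB : (W `<=` B)%classic by move=> w Ww; exists w, 0; split; [left|rewrite scale0r addr0].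
  have [PB|nPB] := pselect (P B).
    have Bv : B v by exists 0, 1; split; [right|rewrite add0r scale1r].
    have : W v.
      apply: contrapT => nWv; apply: (Wmax B) => //; split => // BW.
      exact: nWv (BW _ Bv).
    by move=> Wv; exists 0, v; split; [exists v, 0; split; [left|exact: lspan0|rewrite addr0]|rewrite scale0r addr0].
  have [w [r [w0 sp]]] : exists w r, W0 w /\ lspan l (e - (w + r *: v)).
    apply: contrapT => H; apply: nPB; split => // z [w [r [w0 ->]]] sp.
    by apply: H; exists w, r.
  have rn0 : r != 0.
    apply/negP => /eqP r0; apply: Wspe; exists w, (e - (w + r *: v)); split => //.
    by rewrite r0 scale0r addr0 addrC subrK.
  exists r^-1, ((- r^-1) *: w + (- r^-1) *: (e - (w + r *: v))); split.
    exists ((- r^-1) *: w + 0), ((- r^-1) *: (e - (w + r *: v)) + 0); split.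
    - by apply: W0C => //; right.
    - by apply: lspanC => //; exact: lspan0.
    - by rewrite !addr0.
  rewrite !(scaleNr, scalerN, scalerDr, scalerBr, scalerA, opprD, opprK) mulVf // scale1r.
  by rewrite addrCA addKr addrAC addNr add0r.
have uniq c c' u u' : Wsp u -> Wsp u' -> u + c *: e = u' + c' *: e -> c = c'.
  move=> su su' E; apply: contrapT => ncc; apply: Wspe.
  have d0 : c - c' != 0 by rewrite subr_eq0; apply/eqP.
  have -> : e = (c - c')^-1 *: (u' - u).
    apply: (@scalerI _ _ (c - c')) => //.
    rewrite scalerA mulfV // scale1r scalerBl.
    by apply: (@addrI _ u); rewrite addrA E addrK addrC subrK.
  have := WspC (c - c')^-1 _ _ (WspC (-1) _ _ su su') Wsp0.
  by rewrite addr0 scaleN1r [- u + _]addrC.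
pose phi v := projT1 (cid (dec v)).
have phiP v : exists u, Wsp u /\ v = u + phi v *: e := projT2 (cid (dec v)).
exists phi; split.
- move=> r x y.
  have [ux [sx ex]] := phiP x; have [uy [sy ey]] := phiP y.
  have [u [su eu]] := phiP (r *: x + y).
  apply: (uniq _ _ _ _ su (WspC r _ _ sx sy)).
  rewrite -eu {1}ex {1}ey scalerDr scalerA addrACA scalerDl.
  by [].
- have [u [su eu]] := phiP e.
  by apply: (uniq _ _ _ _ su Wsp0); rewrite -eu add0r scale1r.
- move=> v sv; have [u [su eu]] := phiP v.
  apply: (uniq _ _ _ _ su (_ : Wsp v)); last by rewrite -eu scale0r addr0.
  by exists 0, v; split; [right| |rewrite add0r].
Qed.


Section BilinFacts.
Variables (V : lmodType k) (f : A -> A -> V).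
Hypothesis fb : bilin f.

Lemma bl0 y : f 0 y = 0.
Proof. by have := fb.1 (-1) 0 0 y; rewrite scaleN1r oppr0 addr0 scaleN1r addNr. Qed.
Lemma br0 x : f x 0 = 0.
Proof. by have := fb.2 (-1) x 0 0; rewrite scaleN1r oppr0 addr0 scaleN1r addNr. Qed.
Lemma blD x x' y : f (x + x') y = f x y + f x' y.
Proof. by have := fb.1 1 x x' y; rewrite !scale1r. Qed.
Lemma brD x y y' : f x (y + y') = f x y + f x y'.
Proof. by have := fb.2 1 x y y'; rewrite !scale1r. Qed.
Lemma blZ r x y : f (r *: x) y = r *: f x y.
Proof. by have := fb.1 r x 0 y; rewrite !addr0 bl0 addr0. Qed.
Lemma brZ r x y : f x (r *: y) = r *: f x y.
Proof. by have := fb.2 r x y 0; rewrite !addr0 br0 addr0. Qed.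
Lemma bl_sum I (r : seq I) (P : pred I) (F : I -> A) y :
  f (\sum_(i <- r | P i) F i) y = \sum_(i <- r | P i) f (F i) y.
Proof. exact: (big_morph (fun x => f x y) (fun x x' => blD x x' y) (bl0 y)). Qed.
Lemma br_sum I (r : seq I) (P : pred I) (F : I -> A) x :
  f x (\sum_(i <- r | P i) F i) = \sum_(i <- r | P i) f x (F i).
Proof. exact: (big_morph (fun y => f x y) (fun y y' => brD x y y') (br0 x)). Qed.
End BilinFacts.

Lemma bilin_phi (phi : A -> k) : linf phi -> bilin (fun x y => phi y *: x).
Proof.
move=> lp; split=> r x x' y /=; first by rewrite scalerDr scalerA mulrC -scalerA.
by rewrite lp scalerDl scalerA.
Qed.

Lemma bilin_swap (V : lmodType k) (f : A -> A -> V) : bilin f -> bilin (fun x y => f y x).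
Proof. by move=> [h1 h2]; split=> *; [rewrite h2|rewrite h1]. Qed.

Lemma sep_shift (a e : A) (s : seq (A * A)) (c : nat -> k) :
  e = \sum_(i < size s) c i *: (map snd s)`_i ->
  forall (V : lmodType k) (f : A -> A -> V), bilin f ->
  \sum_(p <- (a, e) :: s) f p.1 p.2 =
  \sum_(p <- [seq ((nth (0,0) s i).1 + c i *: a, (nth (0,0) s i).2) | i <- iota 0 (size s)])
     f p.1 p.2.
Proof.
move=> ee V f fb; rewrite big_cons big_map /= ee (br_sum fb) (big_nth (0,0)).
rewrite /index_iota subn0 -(big_mkord xpredT (fun i => f a (c i *: (map snd s)`_i))).
rewrite /index_iota subn0 addrC -big_split /=; apply: eq_big_seq => i.
rewrite mem_iota add0n => /andP[_ lti].
by rewrite (blD fb) (blZ fb) (nth_map (0,0)) // (brZ fb).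
Qed.

Lemma sep2_n n : forall s : seq (A * A), size s = n ->
  (forall phi, linf phi -> \sum_(p <- s) phi p.2 *: p.1 = 0) ->
  forall (V : lmodType k) (f : A -> A -> V), bilin f -> \sum_(p <- s) f p.1 p.2 = 0.
Proof.
elim: n => [|n IH] [|[a e] s] //= sz hyp V f fb; first by rewrite big_nil.
case: sz => sz.
have [[c ec]|nsp] := pselect (lspan (map snd s) e).
  rewrite size_map in ec.
  rewrite (sep_shift a ec fb); apply: (IH _ _ _ _ _ fb); first by rewrite size_map size_iota.
  by move=> phi lp; rewrite -(sep_shift a ec (bilin_phi lp)); apply: hyp.
have [phi [lp pe pv]] := functional_sep nsp.
have a0 : a = 0.
  have := hyp phi lp; rewrite big_cons /= pe scale1r big1_seq ?addr0 // => p /andP[_ ps].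
  by rewrite pv ?scale0r //; apply: mem_lspan; apply: map_f.
subst a; move: hyp; rewrite big_cons /= (bl0 fb) add0r => hyp.
apply: IH => // phi' lp'; have := hyp phi' lp'.
by rewrite big_cons /= scaler0 add0r.
Qed.

Lemma sep2 (s : seq (A * A)) :
  (forall phi, linf phi -> \sum_(p <- s) phi p.2 *: p.1 = 0) ->
  forall (V : lmodType k) (f : A -> A -> V), bilin f -> \sum_(p <- s) f p.1 p.2 = 0.
Proof. exact: sep2_n. Qed.

Lemma sep1 (s : seq (A * A)) :
  (forall phi, linf phi -> \sum_(p <- s) phi p.1 *: p.2 = 0) ->
  forall (V : lmodType k) (f : A -> A -> V), bilin f -> \sum_(p <- s) f p.1 p.2 = 0.
Proof.
move=> hyp V f fb.
have := @sep2 [seq (p.2, p.1) | p <- s] _ V (fun x y => f y x) (bilin_swap fb).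
rewrite big_map; apply=> phi lp; rewrite big_map; exact: hyp.
Qed.

Lemma sum_diff (s t : seq (A * A)) (V : lmodType k) (f : A -> A -> V) : bilin f ->
  \sum_(p <- s ++ tscale2 (-1) t) f p.1 p.2 =
  \sum_(p <- s) f p.1 p.2 - \sum_(p <- t) f p.1 p.2.
Proof.
move=> fb; rewrite big_cat big_map /= -sumrN; congr (_ + _); apply: eq_bigr => p _.
by rewrite (blZ fb) scaleN1r.
Qed.

Lemma bilin_comp (m : A -> A -> A) (V : lmodType k) (f : A -> A -> V)
  (g1 g2 : A -> A) :
  (forall r x y, g1 (r *: x + y) = r *: g1 x + g1 y) ->
  (forall r x y, g2 (r *: x + y) = r *: g2 x + g2 y) ->
  bilin f -> bilin (fun u v => f (g1 u) (g2 v)).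
Proof. by move=> h1 h2 [f1 f2]; split=> *; rewrite ?h1 ?h2 ?f1 ?f2. Qed.

Lemma nd_gen (m : A -> A -> A) : bilin m ->
  (forall b, (forall a, m b a = 0) -> b = 0) ->
  forall s t : seq (A * A),
  (forall x x' (V : lmodType k) (f : A -> A -> V), bilin f ->
     \sum_(p <- s) f (m p.1 x) (m p.2 x') = \sum_(p <- t) f (m p.1 x) (m p.2 x')) ->
  teq2 s t.
Proof.
move=> mb mnd s t hyp.
have mr x : forall r y z, m (r *: y + z) x = r *: m y x + m z x by move=> *; rewrite mb.1.
pose d := s ++ tscale2 (-1) t.
have H x x' (V : lmodType k) (f : A -> A -> V) : bilin f ->
    \sum_(p <- d) f (m p.1 x) (m p.2 x') = 0.
  move=> fb; rewrite (sum_diff _ _ (bilin_comp m (mr x) (mr x') fb)).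
  by rewrite hyp // subrr.
have S1 x (psi : A -> k) : linf psi -> \sum_(p <- d) psi (m p.1 x) *: p.2 = 0.
  move=> lp; apply: mnd => x'.
  rewrite (bl_sum mb) /=.
  have := H x x' A (fun u v => psi u *: v) (bilin_swap (bilin_phi lp)).
  move=> E; transitivity (\sum_(p <- d) psi (m p.1 x) *: m p.2 x'); last exact: E.
  apply: eq_bigr => p _.
  by have := mb.1 (psi (m p.1 x)) p.2 0 x'; rewrite !addr0 (bl0 mb) addr0.
have S2 x (V : lmodType k) (f : A -> A -> V) : bilin f ->
    \sum_(p <- d) f (m p.1 x) p.2 = 0.
  move=> fb; have := @sep1 [seq (m p.1 x, p.2) | p <- d] _ V f fb.
  by rewrite big_map; apply=> psi lp; rewrite big_map; apply: S1.
have S3 (phi : A -> k) : linf phi -> \sum_(p <- d) phi p.2 *: p.1 = 0.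
  move=> lp; apply: mnd => x; rewrite (bl_sum mb) /=.
  transitivity (\sum_(p <- d) phi p.2 *: m p.1 x); last exact: (S2 x A _ (bilin_phi lp)).
  apply: eq_bigr => p _.
  by rewrite (blZ mb).
move=> V f fb; apply/eqP; rewrite -subr_eq0 -sum_diff //; apply/eqP.
exact: sep2.
Qed.

End Sep.

Section Gen.
Variables (k : fieldType) (A : lmodType k).
Implicit Types (s t u : tensor2 A).

Lemma teq2_refl s : teq2 s s. Proof. by []. Qed.
Lemma teq2_sym s t : teq2 s t -> teq2 t s.
Proof. by move=> h V f fb; rewrite h. Qed.
Lemma teq2_trans s t u : teq2 s t -> teq2 t u -> teq2 s u.
Proof. by move=> h1 h2 V f fb; rewrite h1 ?h2. Qed.

Lemma sum_tlift2 (F : A -> A -> tensor2 A) s (V : lmodType k) (f : A -> A -> V) :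
  \sum_(p <- tlift2 F s) f p.1 p.2 = \sum_(p <- s) \sum_(q <- F p.1 p.2) f q.1 q.2.
Proof. by rewrite big_flatten big_map. Qed.

Lemma sum_tscale2 r s (V : lmodType k) (f : A -> A -> V) : bilin f ->
  \sum_(p <- tscale2 r s) f p.1 p.2 = r *: \sum_(p <- s) f p.1 p.2.
Proof.
by move=> fb; rewrite big_map scaler_sumr; apply: eq_bigr => p _; rewrite (blZ fb).
Qed.

Lemma bilin_lift (F : A -> A -> tensor2 A) (V : lmodType k) (f : A -> A -> V) :
  tbilin2 F -> bilin f -> bilin (fun x y => \sum_(q <- F x y) f q.1 q.2).
Proof.
move=> [F1 F2] fb; split=> r x x' y /=.
  by rewrite (F1 r x x' y V f fb) big_cat (sum_tscale2 _ _ fb).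
by rewrite (F2 r x x' y V f fb) big_cat (sum_tscale2 _ _ fb).
Qed.

Lemma teq2_lift (F : A -> A -> tensor2 A) s t :
  tbilin2 F -> teq2 s t -> teq2 (tlift2 F s) (tlift2 F t).
Proof.
move=> Fb h V f fb; rewrite !sum_tlift2.
exact: (h V _ (bilin_lift Fb fb)).
Qed.

Lemma lift_fix_span (F G : A -> A -> tensor2 A) u :
  tbilin2 F -> (forall c c', teq2 (tlift2 F (G c c')) (G c c')) ->
  tspan2 (fun t => exists c c', t = G c c') u -> teq2 (tlift2 F u) u.
Proof.
move=> Fb Gfix [l [lP ul]] V f fb; rewrite sum_tlift2.
rewrite (ul V _ (bilin_lift Fb fb)) (ul V f fb) !big_flatten !big_map.
apply: eq_big_seq => q ql; rewrite (sum_tscale2 _ _ (bilin_lift Fb fb)) (sum_tscale2 _ _ fb).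
have [c [c' ->]] := lP q ql; congr (_ *: _).
by rewrite -sum_tlift2; apply: Gfix.
Qed.

Lemma teq2_map (g1 g2 : A -> A) s t :
  (forall r x y, g1 (r *: x + y) = r *: g1 x + g1 y) ->
  (forall r x y, g2 (r *: x + y) = r *: g2 x + g2 y) ->
  teq2 s t -> teq2 [seq (g1 p.1, g2 p.2) | p <- s] [seq (g1 p.1, g2 p.2) | p <- t].
Proof.
move=> h1 h2 h V f fb; rewrite !big_map /=.
exact: (h V _ (bilin_comp (fun x y => x) h1 h2 fb)).
Qed.

Section Mul.
Variable mul : A -> A -> A.
Hypothesis alg : nualg mul.
Hypothesis nd : nondeg_mul mul.

Lemma mulb : bilin mul.
Proof. by case: alg => h1 h2 _; split. Qed.
Lemma mulA x y z : mul x (mul y z) = mul (mul x y) z.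
Proof. by case: alg => _ _ ->. Qed.
Lemma mull x : forall r y z, mul (r *: y + z) x = r *: mul y x + mul z x.
Proof. by move=> *; rewrite mulb.1. Qed.
Lemma mulr x : forall r y z, mul x (r *: y + z) = r *: mul x y + mul x z.
Proof. by move=> *; rewrite mulb.2. Qed.

Lemma sum_tprod_r s x x' (V : lmodType k) (f : A -> A -> V) :
  \sum_(p <- tprod2 mul s [:: (x, x')]) f p.1 p.2 =
  \sum_(p <- s) f (mul p.1 x) (mul p.2 x').
Proof. by rewrite /tprod2 big_allpairs_dep; apply: eq_bigr => p _; rewrite big_seq1. Qed.

Lemma sum_tprod_l t x x' (V : lmodType k) (f : A -> A -> V) :
  \sum_(p <- tprod2 mul [:: (x, x')] t) f p.1 p.2 =
  \sum_(p <- t) f (mul x p.1) (mul x' p.2).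
Proof. by rewrite /tprod2 big_allpairs_dep big_seq1. Qed.

Lemma nd_r s t :
  (forall x x' (V : lmodType k) (f : A -> A -> V), bilin f ->
    \sum_(p <- tprod2 mul s [:: (x, x')]) f p.1 p.2 =
    \sum_(p <- tprod2 mul t [:: (x, x')]) f p.1 p.2) -> teq2 s t.
Proof.
move=> h; apply: (nd_gen mulb nd.2) => x x' V f fb.
by rewrite -!sum_tprod_r; apply: h.
Qed.

Lemma nd_l s t :
  (forall x x' (V : lmodType k) (f : A -> A -> V), bilin f ->
    \sum_(p <- tprod2 mul [:: (x, x')] s) f p.1 p.2 =
    \sum_(p <- tprod2 mul [:: (x, x')] t) f p.1 p.2) -> teq2 s t.
Proof.
move=> h; apply: (@nd_gen _ _ (fun w x => mul x w) (bilin_swap mulb) nd.1 s t) => x x' V f fb.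
by rewrite -!sum_tprod_l; apply: h.
Qed.

Lemma teq2_prod_r s t x x' : teq2 s t ->
  teq2 (tprod2 mul s [:: (x, x')]) (tprod2 mul t [:: (x, x')]).
Proof.
move=> h V f fb; rewrite !sum_tprod_r.
exact: (h V _ (bilin_comp (fun x y => x) (mull x) (mull x') fb)).
Qed.

Lemma teq2_prod_l s t x x' : teq2 s t ->
  teq2 (tprod2 mul [:: (x, x')] s) (tprod2 mul [:: (x, x')] t).
Proof.
move=> h V f fb; rewrite !sum_tprod_l.
exact: (h V _ (bilin_comp (fun x y => x) (mulr x) (mulr x') fb)).
Qed.

Section Mult.
Variables (L R : A -> A -> tensor2 A).
Hypothesis LR : is_mult2 mul L R.

Lemma M1L y y' x x' : teq2 (tprod2 mul (L y y') [:: (x, x')]) (L (mul y x) (mul y' x')).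
Proof.
case: LR => _ _ comp.
apply: nd_l => z z' V f fb; rewrite !sum_tprod_l.
rewrite (sum_tprod_r _ _ _ (fun w v => f (mul z w) (mul z' v))).
have gb : bilin (fun w v => f (mul w x) (mul v x')).
  exact: (bilin_comp (fun x y => x) (mull x) (mull x') fb).
transitivity (\sum_(p <- tprod2 mul [:: (z, z')] (L y y')) (fun w v => f (mul w x) (mul v x')) p.1 p.2).
  by rewrite (sum_tprod_l _ _ _ (fun w v => f (mul w x) (mul v x'))); apply: eq_bigr => p _; rewrite !mulA.
rewrite (comp z z' y y' V _ gb) (sum_tprod_r _ _ _ (fun w v => f (mul w x) (mul v x'))).
transitivity (\sum_(p <- tprod2 mul (R z z') [:: (mul y x, mul y' x')]) f p.1 p.2).
  by rewrite sum_tprod_r; apply: eq_bigr => p _; rewrite !mulA.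
by rewrite -(comp z z' _ _ V f fb) sum_tprod_l.
Qed.

Lemma M1R y y' x x' : teq2 (tprod2 mul [:: (x, x')] (R y y')) (R (mul x y) (mul x' y')).
Proof.
case: LR => _ _ comp.
apply: nd_r => z z' V f fb; rewrite !sum_tprod_r.
rewrite (sum_tprod_l _ _ _ (fun w v => f (mul w z) (mul v z'))).
have gb : bilin (fun w v => f (mul x w) (mul x' v)).
  exact: (bilin_comp (fun x y => x) (mulr x) (mulr x') fb).
transitivity (\sum_(p <- tprod2 mul (R y y') [:: (z, z')]) (fun w v => f (mul x w) (mul x' v)) p.1 p.2).
  by rewrite (sum_tprod_r _ _ _ (fun w v => f (mul x w) (mul x' v))); apply: eq_bigr => p _; rewrite !mulA.
rewrite -(comp y y' z z' V _ gb) (sum_tprod_l _ _ _ (fun w v => f (mul x w) (mul x' v))).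
transitivity (\sum_(p <- tprod2 mul [:: (mul x y, mul x' y')] (L z z')) f p.1 p.2).
  by rewrite sum_tprod_l; apply: eq_bigr => p _; rewrite !mulA.
by rewrite (comp _ _ z z' V f fb) sum_tprod_r.
Qed.

Lemma liftL_prod t x x' :
  teq2 (tprod2 mul (tlift2 L t) [:: (x, x')]) (tlift2 L (tprod2 mul t [:: (x, x')])).
Proof.
move=> V f fb; rewrite sum_tprod_r (sum_tlift2 _ _ (fun w v => f (mul w x) (mul v x'))).
rewrite sum_tlift2 (sum_tprod_r _ _ _ (fun w v => \sum_(q <- L w v) f q.1 q.2)).
apply: eq_bigr => p _; rewrite -sum_tprod_r; exact: M1L.
Qed.

Lemma liftR_prod t x x' :
  teq2 (tprod2 mul [:: (x, x')] (tlift2 R t)) (tlift2 R (tprod2 mul [:: (x, x')] t)).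
Proof.
move=> V f fb; rewrite sum_tprod_l (sum_tlift2 _ _ (fun w v => f (mul x w) (mul x' v))).
rewrite sum_tlift2 (sum_tprod_l _ _ _ (fun w v => \sum_(q <- R w v) f q.1 q.2)).
apply: eq_bigr => p _; rewrite -sum_tprod_l; exact: M1R.
Qed.

End Mult.
End Mul.
End Gen.

Section Main.
Variables (k : fieldType) (A : lmodType k) (W : wmb_data A).
Hypothesis HW : is_regular_wmb W.

Let H0 : is_wmb W. Proof. by case: HW. Qed.
Let HT3 := let: And3 _ h _ := HW in h.
Let HT4 := let: And3 _ _ h := HW in h.
Let alg := wmb_alg H0.
Let ndg := wmb_nondeg H0.
Let Em := wmb_E_mult H0.
Let ELb : tbilin2 (EL W). Proof. by case: Em. Qed.
Let ERb : tbilin2 (ER W). Proof. by case: Em. Qed.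
Let epsl : linf (eps W). Proof. exact: (wmb_eps_lin H0). Qed.
Let h1b : bilin (fun x y : A => eps W x *: y). Proof. exact: bilin_swap (bilin_phi epsl). Qed.
Let h2b : bilin (fun x y : A => eps W y *: x). Proof. exact: bilin_phi epsl. Qed.

Let EDL a y y' : teq2 (tlift2 (EL W) (DL W a y y')) (DL W a y y').
Proof.
exact: (lift_fix_span ELb (fun c c' => (wmb_E_idem H0 c c').1) ((wmb_span_L H0).1 a y y')).
Qed.
Let ERDR a y y' : teq2 (tlift2 (ER W) (DR W a y y')) (DR W a y y').
Proof.
exact: (lift_fix_span ERb (fun c c' => (wmb_E_idem H0 c c').2) ((wmb_span_R H0).1 a y y')).
Qed.

Let cancel_r x y : (forall c, mul W x c = mul W y c) -> x = y.
Proof.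
move=> h; apply: subr0_eq; apply: ndg.2 => c.
have := (mulb alg).1 (-1) y x c; rewrite scaleN1r addrC => ->.
by rewrite scaleN1r h addNr.
Qed.
Let cancel_l x y : (forall c, mul W c x = mul W c y) -> x = y.
Proof.
move=> h; apply: subr0_eq; apply: ndg.1 => c.
have := (mulb alg).2 (-1) c y x; rewrite scaleN1r addrC => ->.
by rewrite scaleN1r h addNr.
Qed.

Let C3 a b : teq2 (tlift2 (EL W) (T1 W a b)) (T1 W a b).
Proof.
apply: (nd_r alg ndg) => x x' V f fb.
rewrite (liftL_prod alg ndg Em (T1 W a b) x x' fb).
rewrite (teq2_lift ELb ((wmb_T1 H0 a b x x').1) fb) (EDL a x (mul W b x') fb).
by rewrite ((wmb_T1 H0 a b x x').1 V f fb).
Qed.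

Let C4 a b : teq2 (tlift2 (ER W) (T2 W a b)) (T2 W a b).
Proof.
apply: (nd_l alg ndg) => x x' V f fb.
rewrite (liftR_prod alg ndg Em (T2 W a b) x x' fb).
rewrite (teq2_lift ERb ((wmb_T2 H0 a b x x').2) fb) (ERDR b (mul W x a) x' fb).
by rewrite ((wmb_T2 H0 a b x x').2 V f fb).
Qed.

Let C1 a b : teq2 (tlift2 (ER W) (T3 W a b)) (T3 W a b).
Proof.
apply: (nd_l alg ndg) => x x' V f fb.
rewrite (liftR_prod alg ndg Em (T3 W a b) x x' fb).
rewrite (teq2_lift ERb ((HT3 a b x x').2) fb) (ERDR a x (mul W x' b) fb).
by rewrite ((HT3 a b x x').2 V f fb).
Qed.

Let C2 a b : teq2 (tlift2 (EL W) (T4 W a b)) (T4 W a b).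
Proof.
apply: (nd_r alg ndg) => x x' V f fb.
rewrite (liftL_prod alg ndg Em (T4 W a b) x x' fb).
rewrite (teq2_lift ELb ((HT4 a b x x').1) fb) (EDL b (mul W a x) x' fb).
by rewrite ((HT4 a b x x').1 V f fb).
Qed.

Let C1' a b c : teq2 (rmul_2 (mul W) (T3 W a b) c) (lmul_2 (mul W) b (T1 W a c)).
Proof.
apply: (nd_r alg ndg) => x x' V f fb.
transitivity (\sum_(p <- tprod2 (mul W) (T3 W a b) [:: (x, mul W c x')]) f p.1 p.2).
  rewrite !(sum_tprod_r (mul W)) big_map; apply: eq_bigr => p _ /=; by rewrite (mulA alg).
rewrite ((HT3 a b x (mul W c x')).1 V f fb) (sum_tprod_r (mul W)) !big_map /=.
have gb : bilin (fun w v => f w (mul W b v)).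
  exact: (bilin_comp (fun x y => x) (fun r x y => erefl) (mulr alg b) fb).
transitivity (\sum_(p <- tprod2 (mul W) (T1 W a c) [:: (x, x')]) (fun w v => f w (mul W b v)) p.1 p.2).
  by symmetry; apply: ((wmb_T1 H0 a c x x').1 V _ gb).
by rewrite (sum_tprod_r (mul W) _ _ _ (fun w v => f w (mul W b v))); apply: eq_bigr => p _; rewrite (mulA alg).
Qed.

Let E31 a b : eps_id (eps W) (T3 W a b) = mul W b a.
Proof.
apply: cancel_r => c.
transitivity (\sum_(p <- rmul_2 (mul W) (T3 W a b) c) eps W p.1 *: p.2).
  rewrite big_map /eps_id (bl_sum (mulb alg)); apply: eq_bigr => p _ /=.
  by rewrite (blZ (mulb alg)).
rewrite (C1' a b c h1b) big_map /= -(mulA alg) -(wmb_counit H0 a c).1 /eps_id.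
rewrite (br_sum (mulb alg)); apply: eq_bigr => p _.
by rewrite (brZ (mulb alg)).
Qed.

Let C2' a b c : teq2 (lmul_1 (mul W) c (T4 W a b)) (rmul_1 (mul W) (T2 W c b) a).
Proof.
apply: (nd_l alg ndg) => x x' V f fb.
transitivity (\sum_(p <- tprod2 (mul W) [:: (mul W x c, x')] (T4 W a b)) f p.1 p.2).
  rewrite !(sum_tprod_l (mul W)) big_map; apply: eq_bigr => p _ /=; by rewrite (mulA alg).
rewrite ((HT4 a b (mul W x c) x').2 V f fb) (sum_tprod_l (mul W)) !big_map /=.
have gb : bilin (fun w v => f (mul W w a) v).
  exact: (bilin_comp (fun x y => x) (mull alg a) (fun r x y => erefl) fb).
transitivity (\sum_(p <- tprod2 (mul W) [:: (x, x')] (T2 W c b)) (fun w v => f (mul W w a) v) p.1 p.2).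
  by symmetry; apply: ((wmb_T2 H0 c b x x').2 V _ gb).
by rewrite (sum_tprod_l (mul W) _ _ _ (fun w v => f (mul W w a) v)); apply: eq_bigr => p _; rewrite (mulA alg).
Qed.

Let E42 a b : id_eps (eps W) (T4 W a b) = mul W b a.
Proof.
apply: cancel_l => c.
transitivity (\sum_(p <- lmul_1 (mul W) c (T4 W a b)) eps W p.2 *: p.1).
  rewrite big_map /id_eps (br_sum (mulb alg)); apply: eq_bigr => p _ /=.
  by rewrite (brZ (mulb alg)).
rewrite (C2' a b c h2b) big_map /= (mulA alg) -(wmb_counit H0 c b).2 /id_eps.
rewrite (bl_sum (mulb alg)); apply: eq_bigr => p _.
by rewrite (blZ (mulb alg)).
Qed.

Lemma main a b :
  [/\ (forall s : tensor2 A, teq2 s (T3 W a b) ->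
         \sum_(p <- s) piLbar_r W p.1 p.2 = mul W b a),
      (forall s : tensor2 A, teq2 s (T4 W a b) ->
         \sum_(p <- s) piRbar_l W p.2 p.1 = mul W b a),
      (forall s : tensor2 A, teq2 s (T1 W a b) ->
         \sum_(p <- s) piL_l W p.1 p.2 = mul W a b) &
      (forall s : tensor2 A, teq2 s (T2 W a b) ->
         \sum_(p <- s) piR_r W p.2 p.1 = mul W a b)].
Proof.
split=> s hs.
- rewrite /piLbar_r /eps_id (hs _ _ (bilin_lift ERb h1b)) /=.
  rewrite -(sum_tlift2 (ER W) (T3 W a b) (fun x y => eps W x *: y)).
  by rewrite (C1 a b h1b) -E31.
- rewrite /piRbar_l /id_eps (hs _ _ (bilin_lift ELb h2b)) /=.
  rewrite -(sum_tlift2 (EL W) (T4 W a b) (fun x y => eps W y *: x)).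
  by rewrite (C2 a b h2b) -E42.
- rewrite /piL_l /eps_id (hs _ _ (bilin_lift ELb h1b)) /=.
  rewrite -(sum_tlift2 (EL W) (T1 W a b) (fun x y => eps W x *: y)).
  by rewrite (C3 a b h1b) -(wmb_counit H0 a b).1.
- rewrite /piR_r /id_eps (hs _ _ (bilin_lift ERb h2b)) /=.
  rewrite -(sum_tlift2 (ER W) (T2 W a b) (fun x y => eps W y *: x)).
  by rewrite (C4 a b h2b) -(wmb_counit H0 a b).2.
Qed.

End Main.

End Aux.

Theorem lemma3p7 (k : fieldType) (A : lmodType k) (W : wmb_data A)
  (HW : is_regular_wmb W) (a b : A) :
  [/\ (* (1) *)
      (forall s : tensor2 A, teq2 s (T3 W a b) ->
         \sum_(p <- s) piLbar_r W p.1 p.2 = mul W b a),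
      (* (2) *)
      (forall s : tensor2 A, teq2 s (T4 W a b) ->
         \sum_(p <- s) piRbar_l W p.2 p.1 = mul W b a),
      (* (3) *)
      (forall s : tensor2 A, teq2 s (T1 W a b) ->
         \sum_(p <- s) piL_l W p.1 p.2 = mul W a b) &
      (* (4) *)
      (forall s : tensor2 A, teq2 s (T2 W a b) ->
         \sum_(p <- s) piR_r W p.2 p.1 = mul W a b)].
Proof. exact: (Aux.main HW a b). Qed.
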